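(* For metric formulas $\psi,\varphi$, over strict timed traces, and for $n>0$: $\psi\,\mathsf{U}_{[n,n]}\,\varphi\equiv\psi\wedge\bigvee_{i=1}^n\bigcirc_{[i,i]}(\psi\,\mathsf{U}_{[n-i,n-i]}\,\varphi)$; $\psi\,\mathsf{R}_{[n,n]}\,\varphi\equiv\psi\vee\bigwedge_{i=1}^n\widehat{\bigcirc}_{[i,i]}(\psi\,\mathsf{R}_{[n-i,n-i]}\,\varphi)$; $\Diamond_{[n,n]}\varphi\equiv\bigvee_{i=1}^n\bigcirc_{[i,i]}\Diamond_{[n-i,n-i]}\varphi$; $\Box_{[n,n]}\varphi\equiv\bigwedge_{i=1}^n\widehat{\bigcirc}_{[i,i]}\Box_{[n-i,n-i]}\varphi$; and the same holds for the dual past operators (replacing $\mathsf{U},\mathsf{R},\bigcirc,\widehat{\bigcirc},\Diamond,\Box$ by $\mathsf{S},\mathsf{T},\bullet,\widehat{\bullet}$, eventually before ($\top\,\mathsf{S}\,\cdot$), $\blacksquare$, respectively).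
   Context: Metric formulas over $\mathcal{A}$: $\varphi ::= p \mid \bot \mid \varphi_1\otimes\varphi_2 \mid \bullet_I\varphi \mid \varphi_1\,\mathsf{S}_I\,\varphi_2 \mid \varphi_1\,\mathsf{T}_I\,\varphi_2 \mid \bigcirc_I\varphi \mid \varphi_1\,\mathsf{U}_I\,\varphi_2 \mid \varphi_1\,\mathsf{R}_I\,\varphi_2$, $\otimes\in\{\to,\wedge,\vee\}$, $I=[m,n)$; $[m,n]$ abbreviates $[m,n+1)$. Derived: $\neg\varphi=\varphi\to\bot$, $\top=\neg\bot$, $\blacksquare_I\varphi=\bot\,\mathsf{T}_I\,\varphi$, eventually before $=\top\,\mathsf{S}_I\,\varphi$, $\widehat{\bullet}_I\varphi=\bullet_I\varphi\vee\neg\bullet_I\top$, $\Box_I\varphi=\bot\,\mathsf{R}_I\,\varphi$, $\Diamond_I\varphi=\top\,\mathsf{U}_I\,\varphi$, $\widehat{\bigcirc}_I\varphi=\bigcirc_I\varphi\vee\neg\bigcirc_I\top$. Timed HT-trace $\mathbf{M}=(\langle\mathbf{H},\mathbf{T}\rangle,\tau)$ of length $\lambda$: $H_i\subseteq T_i\subseteq\mathcal{A}$, $\tau:[0,\lambda)\to\mathbb{N}$, $\tau(0)=0$; strict means $\tau(i)<\tau(i+1)$ whenever $i+1<\lambda$. Satisfaction at $k$: $\bot$ never; $p$ iff $p\in H_k$; $\wedge,\vee$ usual; $\varphi\to\psi$ iff for both $\mathbf{M}'=\mathbf{M}$ and $\mathbf{M}'=(\langle\mathbf{T},\mathbf{T}\rangle,\tau)$,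 $\mathbf{M}',k\not\models\varphi$ or $\mathbf{M}',k\models\psi$; $\bullet_I\varphi$: $k>0$, $\varphi$ at $k-1$, $\tau(k)-\tau(k-1)\in I$; $\varphi\,\mathsf{S}_I\,\psi$: some $j\in[0,k]$ with $\tau(k)-\tau(j)\in I$, $\psi$ at $j$, $\varphi$ at all $i\in(j,k]$; $\varphi\,\mathsf{T}_I\,\psi$: for all such $j$, $\psi$ at $j$ or $\varphi$ at some $i\in(j,k]$; $\bigcirc_I\varphi$: $k+1<\lambda$, $\varphi$ at $k+1$, $\tau(k+1)-\tau(k)\in I$; $\varphi\,\mathsf{U}_I\,\psi$: some $j\in[k,\lambda)$ with $\tau(j)-\tau(k)\in I$, $\psi$ at $j$, $\varphi$ at all $i\in[k,j)$; $\varphi\,\mathsf{R}_I\,\psi$: for all such $j$, $\psi$ at $j$ or $\varphi$ at some $i\in[k,j)$. $\varphi\equiv\psi$ means $\mathbf{M},k\models\varphi\leftrightarrow\psi$ for all (here: strict) timed HT-traces $\mathbf{M}$ and all $k$. *)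

(* Defs.v *)
From Stdlib Require Import Arith.

Set Implicit Arguments.

(* Metric formulas over atoms of type A.  An interval I = [m, n) is given by
   its two natural bounds m (inclusive) and n (exclusive); [m, n] is [m, n+1). *)
Inductive formula (A : Type) : Type :=
| Atom : A -> formula A
| Bot : formula A
| Impl : formula A -> formula A -> formula A
| And : formula A -> formula A -> formula A
| Or : formula A -> formula A -> formula A
| Prev : nat -> nat -> formula A -> formula A
| Since : nat -> nat -> formula A -> formula A -> formula A
| Trigger : nat -> nat -> formula A -> formula A -> formula A
| Next : nat -> nat -> formula A -> formula A
| Until : nat -> nat -> formula A -> formula A -> formula A
| Release : nat -> nat -> formula A -> formula A -> formula A.

Arguments Bot {A}.

Definition Neg {A} (f : formula A) : formula A := Impl f Bot.
Definition Top {A} : formula A := Neg Bot.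
Definition Iff {A} (f g : formula A) : formula A := And (Impl f g) (Impl g f).
Definition Hist {A} m n (f : formula A) : formula A := Trigger m n Bot f.
Definition Once {A} m n (f : formula A) : formula A := Since m n Top f.
Definition WPrev {A} m n (f : formula A) : formula A :=
  Or (Prev m n f) (Neg (Prev m n Top)).
Definition Always {A} m n (f : formula A) : formula A := Release m n Bot f.
Definition Eventually {A} m n (f : formula A) : formula A := Until m n Top f.
Definition WNext {A} m n (f : formula A) : formula A :=
  Or (Next m n f) (Neg (Next m n Top)).

(* bigOr n f = f 1 \/ ... \/ f n  (for n >= 1);  bigAnd likewise. *)
Fixpoint bigOr {A} (n : nat) (f : nat -> formula A) : formula A :=
  match n with
  | 0 => Bot
  | S k => match k with
           | 0 => f 1
           | S _ => Or (bigOr k f) (f (S k))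
           end
  end.

Fixpoint bigAnd {A} (n : nat) (f : nat -> formula A) : formula A :=
  match n with
  | 0 => Top
  | S k => match k with
           | 0 => f 1
           | S _ => And (bigAnd k f) (f (S k))
           end
  end.

(* Trace length lambda : None = omega (infinite), Some l = finite length l. *)
Definition in_len (lam : option nat) (i : nat) : Prop :=
  match lam with None => True | Some l => i < l end.

Definition in_int (m n d : nat) : Prop := m <= d /\ d < n.

(* Satisfaction at position k of the timed HT-trace (<H,T>, tau) of length lam.
   H T : nat -> A -> Prop give the sets H_i, T_i of atoms. *)
Fixpoint sat {A} (H T : nat -> A -> Prop) (tau : nat -> nat) (lam : option nat)
    (f : formula A) (k : nat) {struct f} : Prop :=
  match f with
  | Atom p => H k p
  | Bot => False
  | Impl f1 f2 =>
      (sat H T tau lam f1 k -> sat H T tau lam f2 k) /\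
      (sat T T tau lam f1 k -> sat T T tau lam f2 k)
  | And f1 f2 => sat H T tau lam f1 k /\ sat H T tau lam f2 k
  | Or f1 f2 => sat H T tau lam f1 k \/ sat H T tau lam f2 k
  | Prev m n f1 =>
      0 < k /\ sat H T tau lam f1 (k - 1) /\ in_int m n (tau k - tau (k - 1))
  | Since m n f1 f2 =>
      exists j, j <= k /\ in_int m n (tau k - tau j) /\ sat H T tau lam f2 j /\
        forall i, j < i -> i <= k -> sat H T tau lam f1 i
  | Trigger m n f1 f2 =>
      forall j, j <= k -> in_int m n (tau k - tau j) ->
        sat H T tau lam f2 j \/ exists i, j < i /\ i <= k /\ sat H T tau lam f1 i
  | Next m n f1 =>
      in_len lam (k + 1) /\ sat H T tau lam f1 (k + 1) /\ in_int m n (tau (k + 1) - tau k)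
  | Until m n f1 f2 =>
      exists j, k <= j /\ in_len lam j /\ in_int m n (tau j - tau k) /\
        sat H T tau lam f2 j /\ forall i, k <= i -> i < j -> sat H T tau lam f1 i
  | Release m n f1 f2 =>
      forall j, k <= j -> in_len lam j -> in_int m n (tau j - tau k) ->
        sat H T tau lam f2 j \/ exists i, k <= i /\ i < j /\ sat H T tau lam f1 i
  end.

Definition strict_trace {A} (H T : nat -> A -> Prop) (tau : nat -> nat)
    (lam : option nat) : Prop :=
  (forall i, in_len lam i -> forall p, H i p -> T i p) /\
  tau 0 = 0 /\
  (forall i, in_len lam (i + 1) -> tau i < tau (i + 1)).

Definition equiv_strict {A} (f g : formula A) : Prop :=
  forall H T tau lam, strict_trace H T tau lam ->
    forall k, in_len lam k -> sat H T tau lam (Iff f g) k.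

(* Main.v *)
Require Import Defs.
From Stdlib Require Import Arith.
From Stdlib Require Import Lia Classical.

Definition tstrict (tau : nat -> nat) (lam : option nat) : Prop :=
  forall i, in_len lam (i + 1) -> tau i < tau (i + 1).

Lemma in_len_down lam a b : a <= b -> in_len lam b -> in_len lam a.
Proof. destruct lam; simpl; lia. Qed.

Lemma mono tau lam : tstrict tau lam ->
  forall b a, a <= b -> in_len lam b -> tau a + (b - a) <= tau b.
Proof.
  intros Hs b; induction b as [|b IH]; intros a Ha Hl.
  - assert (a = 0) by lia; subst; lia.
  - destruct (Nat.eq_dec a (S b)) as [->|Hne]; [lia|].
    assert (Hb : in_len lam b) by (apply (in_len_down lam b (S b)); [lia|exact Hl]).
    specialize (IH a ltac:(lia) Hb).
    assert (Hs' := Hs b). rewrite Nat.add_1_r in Hs'. specialize (Hs' Hl). lia.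
Qed.

Section S.
Context {A : Type}.

Lemma sat_Or (Hh Tt : nat -> A -> Prop) tau lam a b k :
  sat Hh Tt tau lam (Or a b) k <-> sat Hh Tt tau lam a k \/ sat Hh Tt tau lam b k.
Proof. reflexivity. Qed.
Lemma sat_And (Hh Tt : nat -> A -> Prop) tau lam a b k :
  sat Hh Tt tau lam (And a b) k <-> sat Hh Tt tau lam a k /\ sat Hh Tt tau lam b k.
Proof. reflexivity. Qed.

Lemma bigOr_sat (Hh Tt : nat -> A -> Prop) tau lam n (f : nat -> formula A) k : 0 < n ->
  (sat Hh Tt tau lam (bigOr n f) k <-> exists i, 1 <= i <= n /\ sat Hh Tt tau lam (f i) k).
Proof.
  intros Hn. induction n as [|m IH]; [lia|].
  destruct m as [|m'].
  - simpl. split; [intro H; exists 1; split; [lia|exact H]|].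
    intros [i [Hi H]]. assert (i = 1) by lia. subst; exact H.
  - change (bigOr (S (S m')) f) with (Or (bigOr (S m') f) (f (S (S m')))).
    rewrite sat_Or, IH by lia. split.
    + intros [[i [Hi H]]|H]; [exists i; split; [lia|exact H]|exists (S (S m')); split; [lia|exact H]].
    + intros [i [Hi H]]. destruct (Nat.eq_dec i (S (S m'))) as [->|Hne]; [right; exact H|].
      left; exists i; split; [lia|exact H].
Qed.

Lemma bigAnd_sat (Hh Tt : nat -> A -> Prop) tau lam n (f : nat -> formula A) k : 0 < n ->
  (sat Hh Tt tau lam (bigAnd n f) k <-> forall i, 1 <= i <= n -> sat Hh Tt tau lam (f i) k).
Proof.
  intros Hn. induction n as [|m IH]; [lia|].
  destruct m as [|m'].
  - simpl. split; [intros H i Hi; assert (i = 1) by lia; subst; exact H|].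
    intros H; apply H; lia.
  - change (bigAnd (S (S m')) f) with (And (bigAnd (S m') f) (f (S (S m')))).
    rewrite sat_And, IH by lia. split.
    + intros [H1 H2] i Hi. destruct (Nat.eq_dec i (S (S m'))) as [->|Hne]; [exact H2|].
      apply H1; lia.
    + intros H; split; [intros i Hi; apply H; lia| apply H; lia].
Qed.

Definition equiv_sem (f g : formula A) : Prop :=
  forall (Hh Tt : nat -> A -> Prop) tau lam, tstrict tau lam -> forall k, in_len lam k ->
    (sat Hh Tt tau lam f k <-> sat Hh Tt tau lam g k).

Lemma equiv_of f g : equiv_sem f g -> equiv_strict f g.
Proof.
  intros E Hh Tt tau lam [_ [_ Hs]] k Hk. unfold Iff. simpl.
  assert (E1 := E Hh Tt tau lam Hs k Hk). assert (E2 := E Tt Tt tau lam Hs k Hk).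
  tauto.
Qed.

End S.
Section C.
Context {A : Type} (Hh Tt : nat -> A -> Prop) (tau : nat -> nat) (lam : option nat)
  (Hs : tstrict tau lam).
Notation S := (sat Hh Tt tau lam).

Lemma until_core (psi phi : formula A) n k : 0 < n -> in_len lam k ->
  (S (Until n (n + 1) psi phi) k <->
   S psi k /\ exists i, 1 <= i <= n /\ S (Next i (i + 1) (Until (n - i) (n - i + 1) psi phi)) k).
Proof.
  intros Hn Hk. simpl. split.
  - intros [j [Hkj [Hlj [[Hd1 Hd2] [Hphi Hpsi]]]]].
    assert (Hjk : k < j) by (destruct (Nat.eq_dec j k); [subst; lia | lia]).
    assert (Hl1 : in_len lam (k + 1)) by (apply (in_len_down lam _ j); [lia|exact Hlj]).
    assert (M1 := mono tau lam Hs (k + 1) k ltac:(lia) Hl1).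
    assert (M2 := mono tau lam Hs j (k + 1) ltac:(lia) Hlj).
    split; [apply Hpsi; lia|].
    exists (tau (k + 1) - tau k). split; [lia|].
    split; [exact Hl1|]. split; [|unfold Defs.in_int; lia].
    exists j. split; [lia|]. split; [exact Hlj|]. split; [unfold Defs.in_int; lia|].
    split; [exact Hphi|]. intros i Hi1 Hi2; apply Hpsi; lia.
  - intros [Hpk [i [Hi [Hl1 [[j [Hkj [Hlj [[Hd1 Hd2] [Hphi Hpsi]]]]] [He1 He2]]]]]].
    assert (M1 := mono tau lam Hs (k + 1) k ltac:(lia) Hl1).
    assert (M2 := mono tau lam Hs j (k + 1) ltac:(lia) Hlj).
    exists j. split; [lia|]. split; [exact Hlj|]. split; [unfold Defs.in_int; lia|].
    split; [exact Hphi|]. intros i' Hi1 Hi2.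
    destruct (Nat.eq_dec i' k) as [->|]; [exact Hpk|apply Hpsi; lia].
Qed.

Lemma release_core (psi phi : formula A) n k : 0 < n -> in_len lam k ->
  (S (Release n (n + 1) psi phi) k <->
   S psi k \/ forall i, 1 <= i <= n -> S (WNext i (i + 1) (Release (n - i) (n - i + 1) psi phi)) k).
Proof.
  intros Hn Hk. unfold WNext, Neg, Top. simpl. split.
  - intros HR. destruct (classic (S psi k)) as [Hp|Hp]; [left; exact Hp|right].
    intros i Hi.
    destruct (classic (in_len lam (k + 1) /\ tau (k + 1) - tau k = i)) as [[Hl1 Hd]|Hno].
    + left. split; [exact Hl1|]. split; [|unfold Defs.in_int; lia].
      assert (M1 := mono tau lam Hs (k + 1) k ltac:(lia) Hl1).
      intros j Hkj Hlj [Hd1 Hd2].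
      assert (M2 := mono tau lam Hs j (k + 1) ltac:(lia) Hlj).
      destruct (HR j ltac:(lia) Hlj ltac:(unfold Defs.in_int; lia)) as [H|[i' [Hi1 [Hi2 Hi3]]]];
        [left; exact H|right].
      exists i'. destruct (Nat.eq_dec i' k) as [->|]; [contradiction|].
      split; [lia|]; split; [lia|exact Hi3].
    + right. split; intros [Hl1 [_ [Hd1 Hd2]]]; apply Hno; (split; [exact Hl1|lia]).
  - intros HR j Hkj Hlj [Hd1 Hd2].
    assert (Hjk : k < j) by (destruct (Nat.eq_dec j k); [subst; lia | lia]).
    destruct HR as [Hp|HR]; [right; exists k; split; [lia|split; [lia|exact Hp]]|].
    assert (Hl1 : in_len lam (k + 1)) by (apply (in_len_down lam _ j); [lia|exact Hlj]).
    assert (M1 := mono tau lam Hs (k + 1) k ltac:(lia) Hl1).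
    assert (M2 := mono tau lam Hs j (k + 1) ltac:(lia) Hlj).
    destruct (HR (tau (k + 1) - tau k) ltac:(lia)) as [[_ [HX _]]|[HN _]].
    + destruct (HX j ltac:(lia) Hlj ltac:(unfold Defs.in_int; lia)) as [H|[i' [Hi1 [Hi2 Hi3]]]];
        [left; exact H|right; exists i'; split; [lia|split; [lia|exact Hi3]]].
    + exfalso. apply HN; split; [exact Hl1|split; [split; intros []|unfold Defs.in_int; lia]].
Qed.

Lemma since_core (psi phi : formula A) n k : 0 < n -> in_len lam k ->
  (S (Since n (n + 1) psi phi) k <->
   S psi k /\ exists i, 1 <= i <= n /\ S (Prev i (i + 1) (Since (n - i) (n - i + 1) psi phi)) k).
Proof.
  intros Hn Hk. simpl. split.
  - intros [j [Hjk [[Hd1 Hd2] [Hphi Hpsi]]]].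
    assert (Hjk' : j < k) by (destruct (Nat.eq_dec j k); [subst; lia | lia]).
    assert (M1 := mono tau lam Hs k (k - 1) ltac:(lia) Hk).
    assert (Hl1 : in_len lam (k - 1)) by (apply (in_len_down lam _ k); [lia|exact Hk]).
    assert (M2 := mono tau lam Hs (k - 1) j ltac:(lia) Hl1).
    split; [apply Hpsi; lia|].
    exists (tau k - tau (k - 1)). split; [lia|].
    split; [lia|]. split; [|unfold Defs.in_int; lia].
    exists j. split; [lia|]. split; [unfold Defs.in_int; lia|].
    split; [exact Hphi|]. intros i Hi1 Hi2; apply Hpsi; lia.
  - intros [Hpk [i [Hi [Hk0 [[j [Hjk [[Hd1 Hd2] [Hphi Hpsi]]]] [He1 He2]]]]]].
    assert (M1 := mono tau lam Hs k (k - 1) ltac:(lia) Hk).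
    assert (Hl1 : in_len lam (k - 1)) by (apply (in_len_down lam _ k); [lia|exact Hk]).
    assert (M2 := mono tau lam Hs (k - 1) j ltac:(lia) Hl1).
    exists j. split; [lia|]. split; [unfold Defs.in_int; lia|].
    split; [exact Hphi|]. intros i' Hi1 Hi2.
    destruct (Nat.eq_dec i' k) as [->|]; [exact Hpk|apply Hpsi; lia].
Qed.

Lemma trigger_core (psi phi : formula A) n k : 0 < n -> in_len lam k ->
  (S (Trigger n (n + 1) psi phi) k <->
   S psi k \/ forall i, 1 <= i <= n -> S (WPrev i (i + 1) (Trigger (n - i) (n - i + 1) psi phi)) k).
Proof.
  intros Hn Hk. unfold WPrev, Neg, Top. simpl. split.
  - intros HR. destruct (classic (S psi k)) as [Hp|Hp]; [left; exact Hp|right].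
    intros i Hi.
    destruct (classic (0 < k /\ tau k - tau (k - 1) = i)) as [[Hk0 Hd]|Hno].
    + left. split; [exact Hk0|]. split; [|unfold Defs.in_int; lia].
      assert (M1 := mono tau lam Hs k (k - 1) ltac:(lia) Hk).
      assert (Hl1 : in_len lam (k - 1)) by (apply (in_len_down lam _ k); [lia|exact Hk]).
      intros j Hjk [Hd1 Hd2].
      assert (M2 := mono tau lam Hs (k - 1) j ltac:(lia) Hl1).
      destruct (HR j ltac:(lia) ltac:(unfold Defs.in_int; lia)) as [H|[i' [Hi1 [Hi2 Hi3]]]];
        [left; exact H|right].
      exists i'. destruct (Nat.eq_dec i' k) as [->|]; [contradiction|].
      split; [lia|]; split; [lia|exact Hi3].
    + right. split; intros [Hk0 [_ [Hd1 Hd2]]]; apply Hno; (split; [exact Hk0|lia]).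
  - intros HR j Hjk [Hd1 Hd2].
    assert (Hjk' : j < k) by (destruct (Nat.eq_dec j k); [subst; lia | lia]).
    destruct HR as [Hp|HR]; [right; exists k; split; [lia|split; [lia|exact Hp]]|].
    assert (M1 := mono tau lam Hs k (k - 1) ltac:(lia) Hk).
    assert (Hl1 : in_len lam (k - 1)) by (apply (in_len_down lam _ k); [lia|exact Hk]).
    assert (M2 := mono tau lam Hs (k - 1) j ltac:(lia) Hl1).
    destruct (HR (tau k - tau (k - 1)) ltac:(lia)) as [[_ [HX _]]|[HN _]].
    + destruct (HX j ltac:(lia) ltac:(unfold Defs.in_int; lia)) as [H|[i' [Hi1 [Hi2 Hi3]]]];
        [left; exact H|right; exists i'; split; [lia|split; [lia|exact Hi3]]].
    + exfalso. apply HN; split; [lia|split; [split; intros []|unfold Defs.in_int; lia]].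
Qed.
End C.

(* An interval [a,a] is written with bounds a (a+1), i.e. [a, a+1). *)
Theorem lemma2 (A : Type) (psi phi : formula A) (n : nat) (Hn : 0 < n) :
  equiv_strict (Until n (n + 1) psi phi)
    (And psi (bigOr n (fun i => Next i (i + 1) (Until (n - i) (n - i + 1) psi phi)))) /\
  equiv_strict (Release n (n + 1) psi phi)
    (Or psi (bigAnd n (fun i => WNext i (i + 1) (Release (n - i) (n - i + 1) psi phi)))) /\
  equiv_strict (Eventually n (n + 1) phi)
    (bigOr n (fun i => Next i (i + 1) (Eventually (n - i) (n - i + 1) phi))) /\
  equiv_strict (Always n (n + 1) phi)
    (bigAnd n (fun i => WNext i (i + 1) (Always (n - i) (n - i + 1) phi))) /\
  equiv_strict (Since n (n + 1) psi phi)
    (And psi (bigOr n (fun i => Prev i (i + 1) (Since (n - i) (n - i + 1) psi phi)))) /\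
  equiv_strict (Trigger n (n + 1) psi phi)
    (Or psi (bigAnd n (fun i => WPrev i (i + 1) (Trigger (n - i) (n - i + 1) psi phi)))) /\
  equiv_strict (Once n (n + 1) phi)
    (bigOr n (fun i => Prev i (i + 1) (Once (n - i) (n - i + 1) phi))) /\
  equiv_strict (Hist n (n + 1) phi)
    (bigAnd n (fun i => WPrev i (i + 1) (Hist (n - i) (n - i + 1) phi))).
Proof.
  unfold Eventually, Always, Once, Hist.
  repeat match goal with |- _ /\ _ => split end; apply equiv_of; intros Hh Tt tau lam Hs k Hk;
    first [ rewrite (until_core Hh Tt tau lam Hs) by assumption
          | rewrite (release_core Hh Tt tau lam Hs) by assumption
          | rewrite (since_core Hh Tt tau lam Hs) by assumption
          | rewrite (trigger_core Hh Tt tau lam Hs) by assumption ];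
    rewrite ?sat_And, ?sat_Or, ?bigOr_sat, ?bigAnd_sat by assumption;
    try reflexivity.
  all: assert (HT : sat Hh Tt tau lam Top k) by (simpl; tauto);
       change (sat Hh Tt tau lam Bot k) with False; tauto.
Qed.
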